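(* Let $(S,* )$ be a finite cycle set and let $k\ge 1$. Let $S^{[k]}=\{s^{[k]}: s\in S\}\subseteq M$ and define $s^{[k]}\star t^{[k]}=\big(\psi_k(s)(t)\big)^{[k]}$ for $s,t\in S$. Then $(S^{[k]},\star)$ is a cycle set.
   Context: A cycle set is a set $S$ with a binary operation $*$ such that each $t\mapsto s*t$ is bijective and $(s*t)*(s*u)=(t*s)*(t*u)$ for all $s,t,u$. Write $S=\{s_1,\dots,s_n\}$, let $\psi(s)\in\mathfrak S_n$ satisfy $s_i*s_j=s_{\psi(s_i)(j)}$ (we write $\psi(s)(s_j)=s_{\psi(s)(j)}$), and $T(s)=s*s$. The structure monoid $M$ is the monoid with presentation $\langle S\mid s(s*t)=t(t*s),\ s\ne t\rangle$. For $s\in S$, $k\ge0$: $s^{[k]}=s\,T(s)\,T^2(s)\cdots T^{k-1}(s)\in M$ and $\psi_k(s)=\psi(T^{k-1}(s))\circ\cdots\circ\psi(T(s))\circ\psi(s)$. For $k\ge1$ the map $s\mapsto s^{[k]}$ is injective, so $\star$ is well defined. *)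

(* Defs.v *)
From mathcomp Require Import all_boot.
From Stdlib Require Import Relations.Relation_Operators.
Set Implicit Arguments. Unset Strict Implicit. Unset Printing Implicit Defensive.

Definition is_cycle_set (S : Type) (op : S -> S -> S) : Prop :=
  (forall s, bijective (op s)) /\
  (forall s t u, op (op s t) (op s u) = op (op t s) (op t u)).

Inductive mstep (S : Type) (op : S -> S -> S) : seq S -> seq S -> Prop :=
  | MStep (a b : seq S) (s t : S) :
      s <> t -> mstep op (a ++ [:: s; op s t] ++ b) (a ++ [:: t; op t s] ++ b).

(* Equality in the structure monoid M = <S | s(s*t) = t(t*s), s <> t>:
   words (elements of the free monoid seq S) modulo the congruence generated
   by the relations, i.e. the equivalence closure of mstep. *)
Definition meq (S : Type) (op : S -> S -> S) : seq S -> seq S -> Prop :=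
  clos_refl_sym_trans (seq S) (mstep op).

Definition Tmap (S : Type) (op : S -> S -> S) (s : S) : S := op s s.

Definition bracket (S : Type) (op : S -> S -> S) (k : nat) (s : S) : seq S :=
  mkseq (fun i => iter i (Tmap op) s) k.

(* psi_k(s)(t), where psi(s)(t) = s * t and
   psi_k(s) = psi(T^(k-1) s) o ... o psi(T s) o psi(s),
   i.e. psi_0(s) = id, psi_(k+1)(s) = psi_k(T s) o psi(s). *)
Fixpoint psik (S : Type) (op : S -> S -> S) (k : nat) (s t : S) : S :=
  match k with
  | 0 => t
  | k'.+1 => psik op k' (Tmap op s) (op s t)
  end.

(* Main.v *)
Require Import Defs.
From mathcomp Require Import all_boot.
From Stdlib Require Import Relations.Relation_Operators.
From Stdlib Require Import FunctionalExtensionality.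

Section Aux.
Variables (S : finType) (op : S -> S -> S).
Hypothesis Hinj : forall s, injective (op s).
Hypothesis Hid : forall s t u, op (op s t) (op s u) = op (op t s) (op t u).

Lemma bracketS k s : bracket op k.+1 s = s :: bracket op k (Tmap op s).
Proof.
rewrite /bracket /mkseq /= -[1]/(1 + 0) iotaDl -map_comp.
congr (_ :: _); apply: eq_map => i /=. by rewrite add0n -iterS iterSr.
Qed.

Fixpoint cnt (phi : S -> S) (w : seq S) (y : S) : nat :=
  if w is x :: w' then (x == phi y) + cnt (fun z => op x (phi z)) w' y else 0.

Lemma cnt_step a b s t phi y :
  cnt phi (a ++ [:: s; op s t] ++ b) y = cnt phi (a ++ [:: t; op t s] ++ b) y.
Proof.
elim: a phi => [|x a IH] phi /=; last by rewrite IH.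
rewrite !(inj_eq (Hinj _)).
have -> : (fun z => op (op s t) (op s (phi z))) = (fun z => op (op t s) (op t (phi z))).
  by apply: functional_extensionality => z; rewrite Hid.
by rewrite !addnA [(s == _) + _]addnC.
Qed.

Lemma cnt_meq w w' y : meq op w w' -> cnt id w y = cnt id w' y.
Proof.
rewrite /meq => H; induction H as [x z Hs| x | x z _ IH | x z v _ IH1 _ IH2].
- by case: Hs => a b s t _; rewrite cnt_step.
- by [].
- by rewrite IH.
- by rewrite IH1 IH2.
Qed.

Lemma cnt_bracket k : forall s phi y, injective phi ->
  cnt phi (bracket op k s) y = k * (s == phi y).
Proof.
elim: k => [|k IH] s phi y Hphi; first by rewrite /bracket.
rewrite bracketS /= IH; last by move=> a b /Hinj /Hphi.
by rewrite /Tmap (inj_eq (Hinj _)) mulSn.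
Qed.

Lemma bracket_inj k s s' : 0 < k -> meq op (bracket op k s) (bracket op k s') -> s = s'.
Proof.
move=> Hk /(@cnt_meq _ _ s') E.
rewrite !cnt_bracket // eqxx muln1 in E.
apply/eqP; case: (s == s') E => //=; rewrite muln0 => E.
by rewrite -E in Hk.
Qed.

Lemma psik_inj k : forall s, injective (psik op k s).
Proof.
elim: k => [|k IH] s t t' //= /IH; exact: Hinj.
Qed.

Definition step (phi : S -> S) (y : S) := fun z => op (phi y) (phi z).

Lemma step_swap phi y z : step (step phi y) z = step (step phi z) y.
Proof. by apply: functional_extensionality => z0; rewrite /step Hid. Qed.

Lemma foldl_rot phi y ys : foldl step phi (y :: ys) = foldl step phi (ys ++ [:: y]).
Proof.
elim: ys phi => [|z ys IH] phi //=.
by rewrite -IH /= step_swap.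
Qed.

Lemma foldl_nseq_comm k s l phi :
  foldl step phi (nseq k s ++ l) = foldl step phi (l ++ nseq k s).
Proof.
elim: k l => [|k IH] l; first by rewrite cats0.
change (nseq k.+1 s) with (s :: nseq k s).
rewrite cat_cons foldl_rot -catA IH -catA //.
Qed.

Lemma foldl_nseq k : forall s phi,
  foldl step phi (nseq k s) = fun z => psik op k (phi s) (phi z).
Proof.
elim: k => [|k IH] s phi /=; first by [].
by rewrite IH.
Qed.

Lemma psik_identity k s t u :
  psik op k (psik op k s t) (psik op k s u) = psik op k (psik op k t s) (psik op k t u).
Proof.
have E : forall a b, foldl step id (nseq k a ++ nseq k b) =
   fun z => psik op k (psik op k a b) (psik op k a z).
  by move=> a b; rewrite foldl_cat foldl_nseq foldl_nseq.
have := E s t; rewrite foldl_nseq_comm E => H.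
by have := congr1 (fun f => f u) H.
Qed.

End Aux.

Theorem mainTheorem9 (S : finType) (op : S -> S -> S) (k : nat) :
  is_cycle_set op -> 1 <= k ->
  let B := bracket op k in
  let EqM := meq op in
  let st := psik op k in
  (* well-definedness of the star on S^[k] *)
  (forall s s' t t', EqM (B s) (B s') -> EqM (B t) (B t') ->
       EqM (B (st s t)) (B (st s' t'))) /\
  (* y |-> x * y is a bijection of S^[k] *)
  (forall s,
     (forall t t', EqM (B (st s t)) (B (st s t')) -> EqM (B t) (B t')) /\
     (forall u, exists t, EqM (B (st s t)) (B u))) /\
  (* (x*y)*(x*z) = (y*x)*(y*z) in S^[k] *)
  (forall s t u,
     EqM (B (st (st s t) (st s u))) (B (st (st t s) (st t u)))).
Proof.
move=> [Hbij Hid] Hk; cbv zeta.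
have Hinj : forall s, injective (op s) by move=> s; exact: bij_inj.
have BI := @bracket_inj S op Hinj Hid k.
have PI := @psik_inj S op Hinj k.
split; [|split].
- move=> s s' t t' /(BI _ _ Hk) -> /(BI _ _ Hk) ->.
  exact: rst_refl.
- move=> s; split.
  + move=> t t' /(BI _ _ Hk) /PI ->; exact: rst_refl.
  + move=> u; exists (finv (psik op k s) u).
    rewrite f_finv; first exact: rst_refl.
    exact: PI.
- move=> s t u; rewrite (@psik_identity S op Hid); exact: rst_refl.
Qed.
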